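(* Let $G$, $k$, $\epsilon$, $M$ be as in the standing setting, and let $V_1$ and $T$ be as defined in the context. Then: (i) every vertex of $V_1$ has exactly one neighbor of degree at least $k-M$, and all its other neighbors have degree $2$; (ii) $V_1$ is a stable set in $G$; (iii) $V_1\cap T=\emptyset$.
   Context: Standing setting: let $0<\epsilon\le 1/20$, $M=6/\epsilon$, and let $k$ be an integer with $k\ge 3/\epsilon^2$ (so $k\ge 3M$). Let $G$ be a finite simple graph with $\Delta(G)\le k$ such that the square of $G$ is not list $(k+1)$-colorable, while the square of every proper subgraph of $G$ is list $(k+1)$-colorable. Here the square of a graph has the same vertex set, two distinct vertices being adjacent iff they are adjacent or have a common neighbor; it is list $(k+1)$-colorable if for every assignment of lists of $k+1$ colors to the vertices there is a proper coloring of the square from the lists. $d(v)$ denotes the degree of $v$ in $G$. Definitions: $V_1$ is the smallest set of vertices of $G$ with the following property: every vertex $u$ with $d(u)\le M-1$ that has $d(u)-1$ neighbors $v_1,\dots,v_{d(u)-1}$, all of degree $2$, such that the other neighbor of each of $v_2,\dots,v_{d(u)-1}$ belongs to $V_1$ and the other neighbor of $v_1$ has degree at most $M-1$ (not necessarily in $V_1$), belongs to $V_1$. $T$ is the set of vertices of degree $2$ both of whose neighbors lie in $V_1$. *)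

(* Defs.v *)
(* Graph = symmetric irreflexive relation on a finType. *)
From HB Require Import structures.
From mathcomp Require Import all_boot all_order all_algebra.
Set Implicit Arguments. Unset Strict Implicit. Unset Printing Implicit Defensive.
Import Order.TTheory GRing.Theory Num.Theory.

Section Graphs.
Variable T : finType.

Definition deg (e : rel T) (v : T) : nat := #|[set w | e v w]|.

Definition sq_adj (f : rel T) (x y : T) : bool :=
  (x != y) && (f x y || [exists z, f x z && f z y]).

(* Colors are natural numbers (w.l.o.g., finitely many colors are used). *)
Definition sq_list_colorable (S : {set T}) (f : rel T) (n : nat) : Prop :=
  forall L : T -> seq nat,
    (forall v, v \in S -> uniq (L v) /\ size (L v) = n) ->
    exists c : T -> nat,
      (forall v, v \in S -> c v \in L v) /\
      (forall x y, x \in S -> y \in S -> sq_adj f x y -> c x != c y).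

Definition subgraph (e : rel T) (S : {set T}) (f : rel T) : Prop :=
  symmetric f /\ (forall x y, f x y -> [&& x \in S, y \in S & e x y]).

Definition proper_subgraph (e : rel T) (S : {set T}) (f : rel T) : Prop :=
  subgraph e S f /\ (S != setT \/ exists x y, e x y && ~~ f x y).

Local Open Scope ring_scope.

(* The defining condition of V_1, relative to a candidate set X:
   d(u) <= M-1 and u has d(u)-1 distinct neighbours v_1,...,v_{d(u)-1}
   (listed in s), all of degree 2, such that the other neighbour of v_1 has
   degree <= M-1 and the other neighbour of each of v_2..v_{d(u)-1} is in X. *)
Definition V1_cond (R : realFieldType) (M : R) (e : rel T) (X : {set T}) (u : T)
  : Prop :=
  (deg e u)%:R <= M - 1 /\
  exists s : seq T,
    [/\ uniq s, size s = (deg e u).-1,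
        (forall v, v \in s -> e u v /\ deg e v = 2%N) &
        (if s is v1 :: s' then
           (forall w, e v1 w -> w != u -> (deg e w)%:R <= M - 1) /\
           (forall v, v \in s' -> forall w, e v w -> w != u -> w \in X)
         else True)].

(* V_1 is the smallest set X closed under the condition above:
   u is in V_1 iff u belongs to every such closed set. *)
Definition inV1 (R : realFieldType) (M : R) (e : rel T) (u : T) : Prop :=
  forall X : {set T}, (forall w, V1_cond M e X w -> w \in X) -> u \in X.

Definition inT (R : realFieldType) (M : R) (e : rel T) (v : T) : Prop :=
  deg e v = 2%N /\ (forall w, e v w -> inV1 M e w).

End Graphs.

(* Main.v *)
Require Import Defs.
From HB Require Import structures.
From mathcomp Require Import all_boot all_order all_algebra.
From mathcomp Require Import zify ring lra.
From mathcomp Require Import boolp.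
Import Order.TTheory GRing.Theory Num.Theory.
Set Implicit Arguments. Unset Strict Implicit. Unset Printing Implicit Defensive.


Lemma sq_adj_sym (V : finType) (e : rel V) : symmetric e -> symmetric (sq_adj e).
Proof.
move=> se x y; rewrite /sq_adj eq_sym se; congr (_ && (_ || _)).
by apply/existsP/existsP => -[z /andP[h1 h2]]; exists z; rewrite se h2 se h1.
Qed.

Lemma sq_adj_irr (V : finType) (e : rel V) x : sq_adj e x x = false.
Proof. by rewrite /sq_adj eqxx. Qed.

Lemma extend (V : finType) (e : rel V) (k : nat) (L : V -> seq nat) (c : V -> nat)
    (B : {set V}) (a : V) :
  symmetric e -> uniq (L a) -> size (L a) = k.+1 ->
  #|[set y in B | sq_adj e a y]| <= k ->
  (forall x, x \in B -> c x \in L x) ->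
  (forall x y, x \in B -> y \in B -> sq_adj e x y -> c x != c y) ->
  exists c' : V -> nat,
    (forall x, x \in a |: B -> c' x \in L x) /\
    (forall x y, x \in a |: B -> y \in a |: B -> sq_adj e x y -> c' x != c' y).
Proof.
move=> se uL sL hcard cL cP.
set NB := [set y in B | sq_adj e a y].
have [col colL colN] : exists2 col, col \in L a & col \notin [seq c y | y <- enum NB].
  case: (boolP (all (fun x => x \in [seq c y | y <- enum NB]) (L a))) => H.
    have := uniq_leq_size uL (fun x hx => allP H x hx).
    by rewrite size_map -cardE sL => /leq_trans /(_ hcard); rewrite ltnn.
  by move/allPn: H.
exists (fun x => if x == a then col else c x); split.
  move=> x /setU1P [-> | xB]; first by rewrite eqxx.
  by case: eqP => [->|_]; [exact colL | exact: cL].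
move=> x y hx hy hxy.
case: (eqVneq x a) => [xa|xa]; case: (eqVneq y a) => [ya|ya].
- by move: hxy; rewrite xa ya sq_adj_irr.
- have yB : y \in B by case/setU1P: hy => // /eqP; rewrite (negPf ya).
  subst x; apply: contraNneq colN => ->; apply: map_f; by rewrite mem_enum inE yB hxy.
- have xB : x \in B by case/setU1P: hx => // /eqP; rewrite (negPf xa).
  subst y; apply: contraNneq colN => <-; apply: map_f.
  by rewrite mem_enum inE xB sq_adj_sym.
- have yB : y \in B by case/setU1P: hy => // /eqP; rewrite (negPf ya).
  have xB : x \in B by case/setU1P: hx => // /eqP; rewrite (negPf xa).
  exact: cP.
Qed.

Lemma greedy (V : finType) (e : rel V) (k : nat) (L : V -> seq nat) (l : seq V) :
  symmetric e ->
  (forall a, a \in l -> uniq (L a) /\ size (L a) = k.+1) ->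
  (forall a, a \in l -> #|[set y | sq_adj e a y]| <= k) ->
  forall (B : {set V}) (c : V -> nat),
  (forall x, x \in B -> c x \in L x) ->
  (forall x y, x \in B -> y \in B -> sq_adj e x y -> c x != c y) ->
  exists c' : V -> nat,
    (forall x, x \in B :|: [set x in l] -> c' x \in L x) /\
    (forall x y, x \in B :|: [set x in l] -> y \in B :|: [set x in l] ->
       sq_adj e x y -> c' x != c' y).
Proof.
move=> se; elim: l => [|a l IH] hL hN B c cL cP.
  have -> : B :|: [set x in [::]] = B by apply/setP=> x; rewrite !inE orbF.
  by exists c.
have [uL sL] := hL a (mem_head _ _).
have hc : #|[set y in B | sq_adj e a y]| <= k.
  apply: leq_trans (hN a (mem_head _ _)); apply: subset_leq_card.
  by apply/subsetP => y; rewrite !inE => /andP[].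
have [c1 [c1L c1P]] := @extend _ e k L c B a se uL sL hc cL cP.
have [c' [c'L c'P]] := IH (fun x hx => hL x (mem_behead (s:=a::l) hx))
                          (fun x hx => hN x (mem_behead (s:=a::l) hx)) _ _ c1L c1P.
have E : (a |: B) :|: [set x in l] = B :|: [set x in a :: l].
  by apply/setP => x; rewrite !inE; case: (x == a); rewrite ?orbT.
by exists c'; rewrite -E.
Qed.

Lemma card3 (V : finType) (A B C : {set V}) : #|A :|: B :|: C| <= #|A| + #|B| + #|C|.
Proof.
apply: leq_trans (leq_card_setU _ _).1 _; rewrite leq_add2r.
exact: (leq_card_setU _ _).1.
Qed.

Lemma W_card (V : finType) (e : rel V) (u : V) (s : seq V) :
  uniq s -> size s = (deg e u).-1 -> (forall v, v \in s -> e u v) ->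
  #|[set w | e u w && (w \notin s)]| = deg e u - (deg e u).-1.
Proof.
move=> us ss hs.
have -> : [set w | e u w && (w \notin s)] = [set w | e u w] :\: [set x in s].
  by apply/setP => w; rewrite !inE andbC.
rewrite cardsD.
have -> : [set w | e u w] :&: [set x in s] = [set x in s].
  by apply/setIidPr/subsetP => x; rewrite !inE; exact: hs.
rewrite (cardsE (mem s)); move/card_uniqP: us => ->; by rewrite ss.
Qed.

Lemma W_uniq (V : finType) (e : rel V) (u : V) (s : seq V) :
  uniq s -> size s = (deg e u).-1 -> (forall v, v \in s -> e u v) ->
  forall x y, e u x -> x \notin s -> e u y -> y \notin s -> x = y.
Proof.
move=> us ss hs x y ex xs ey ys; apply/eqP; apply: contraT => nxy.
have := W_card us ss hs.
have : #|[set x; y]| <= #|[set w | e u w && (w \notin s)]|.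
  by apply: subset_leq_card; apply/subsetP => z; rewrite !inE => /orP[]/eqP->;
    rewrite ?ex ?xs ?ey ?ys.
rewrite cards2 nxy => h1 h2. lia.
Qed.

Lemma W_exists (V : finType) (e : rel V) (u : V) (s : seq V) :
  uniq s -> size s = (deg e u).-1 -> (forall v, v \in s -> e u v) ->
  0 < deg e u -> exists w, e u w /\ w \notin s.
Proof.
move=> us ss hs d0.
have : 0 < #|[set w | e u w && (w \notin s)]| by rewrite (W_card us ss hs); lia.
by rewrite card_gt0 => /set0Pn [w]; rewrite inE => /andP[a b]; exists w.
Qed.

Definition other (V : finType) (e : rel V) (u z : V) :=
  odflt u [pick y | e z y && (y != u)].

Lemma other_spec (V : finType) (e : rel V) (u z : V) :
  symmetric e -> e u z -> deg e z = 2 ->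
  [/\ e z (other e u z), other e u z != u &
      forall y, e z y -> y != u -> y = other e u z].
Proof.
move=> se ez dz.
have : #|[set w | e z w] :\ u| = 1.
  have := cardsD1 u [set w | e z w]; rewrite inE se ez.
  by move: dz; rewrite /deg => -> /eqP; rewrite add1n eqSS => /eqP <-.
move/eqP; case/cards1P => x Hx.
have hx : x \in [set w | e z w] :\ u by rewrite Hx set11.
rewrite !inE in hx; case/andP: hx => h2 h1.
have h3 : forall y, e z y -> y != u -> y = x.
  move=> y ey yu; have : y \in [set w | e z w] :\ u by rewrite !inE ey yu.
  by rewrite Hx inE => /eqP.
rewrite /other; case: pickP => [y /andP[y1 y2] | H] /=.
  by rewrite (h3 y y1 y2).
by have := H x; rewrite /= h1 h2.
Qed.

Lemma reduce (V : finType) (e : rel V) (k : nat) (u : V) (s : seq V) :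
  symmetric e ->
  (forall (S : {set V}) (f : rel V), proper_subgraph e S f -> sq_list_colorable S f k.+1) ->
  uniq s -> size s = (deg e u).-1 ->
  (forall v, v \in s -> e u v /\ deg e v = 2) ->
  (forall v, v \in s -> forall w, e v w -> w != u -> deg e u + deg e w + 2 <= k) ->
  (forall w, e u w -> w \notin s -> deg e w + deg e u < k) ->
  deg e u <= k ->
  sq_list_colorable setT e k.+1.
Proof.
move=> se min us ss hs hx hw hd L HL.
have hs1 : forall v, v \in s -> e u v by move=> v /hs[].
have Wu := W_uniq us ss hs1.
pose f := [rel x y | e x y && (x != u) && (y != u)].
have pf : proper_subgraph e (setT :\ u) f.
  split; [split|].
  - move=> x y /=; rewrite se.
    by case: (x != u); case: (y != u); rewrite ?andbF ?andbT.
  - by move=> x y /= /andP[/andP[exy xu] yu]; rewrite !inE xu yu exy.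
  - by left; apply/eqP => /setP /(_ u); rewrite !inE eqxx.
have [c0 [c0L c0P]] := min _ _ pf L (fun v _ => HL v (in_setT v)).
pose B0 := [set x | (x != u) && (x \notin s)].
have c0L' : forall x, x \in B0 -> c0 x \in L x.
  by move=> x; rewrite inE => /andP[xu _]; apply: c0L; rewrite !inE xu.
have c0P' : forall x y, x \in B0 -> y \in B0 -> sq_adj e x y -> c0 x != c0 y.
  move=> x y; rewrite !inE => /andP[xu xs] /andP[yu ys].
  move=> /andP[nxy /orP[exy|/existsP[z /andP[exz ezy]]]].
    by apply: c0P; rewrite ?inE ?xu ?yu // /sq_adj nxy /= xu yu exy.
  case: (eqVneq z u) => [zu|zu].
    subst z; have := Wu x y _ xs ezy ys; rewrite se => /(_ exz) xy.
    by rewrite xy eqxx in nxy.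
  apply: c0P; rewrite ?inE ?xu ?yu // /sq_adj nxy /=; apply/orP; right.
  by apply/existsP; exists z; rewrite /= exz ezy xu yu zu.
have hcu : #|[set y in B0 | sq_adj e u y]| <= k.
  pose Y := [set other e u z | z in [set x in s]].
  have incl : forall y, y \in B0 -> sq_adj e u y ->
      (e u y && (y \notin s)) \/ (exists z, [/\ e u z, z \notin s & e z y]) \/ y \in Y.
    move=> y; rewrite inE => /andP[yu ys] /andP[_ /orP[euy|/existsP[z /andP[euz ezy]]]].
      by left; rewrite euy ys.
    case: (boolP (z \in s)) => zs.
      right; right; apply/imsetP; exists z; first by rewrite inE.
      have [_ _ h] := other_spec se (hs1 z zs) (hs z zs).2.
      exact: h.
    by right; left; exists z.
  have hY : #|Y| <= deg e u.
    apply: leq_trans (leq_imset_card _ _) _.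
    rewrite (cardsE (mem s)); move/card_uniqP: us => ->; rewrite ss; exact: leq_pred.
  case: (pickP [pred w | e u w && (w \notin s)]) => [w /andP[euw ws] | H].
    apply: leq_trans (_ : #|[set w] :|: [set y | e w y] :|: Y| <= k).
      apply: subset_leq_card; apply/subsetP => y; rewrite inE => /andP[yB ysq].
      case: (incl y yB ysq) => [/andP[a b]|[[z [a b c]]|h]]; rewrite !inE.
      - by rewrite (Wu y w a b euw ws) eqxx.
      - by rewrite -(Wu z w a b euw ws) c orbT.
      - by rewrite h !orbT.
    apply: leq_trans (card3 _ _ _) _; rewrite cards1.
    have := hw w euw ws; rewrite /deg in hY *; lia.
  apply: leq_trans hd; apply: leq_trans hY; apply: subset_leq_card.
  apply/subsetP => y; rewrite inE => /andP[yB ysq].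
  case: (incl y yB ysq) => [h|[[z [a b c]]|h]] //.
    by have := H y; rewrite /= h.
  by have := H z; rewrite /= a b.
have [uL sL] := HL u (in_setT u).
have [c1 [c1L c1P]] := extend se uL sL hcu c0L' c0P'.
have hN : forall a, a \in s -> #|[set y | sq_adj e a y]| <= k.
  move=> a as_; have [ea da] := hs a as_.
  have [eo ou ho] := other_spec se ea da.
  move: (other e u a) eo ou ho => x eo ou ho.
  apply: leq_trans (_ : #|[set y | e a y] :|: [set y | e u y] :|: [set y | e x y]| <= k).
    apply: subset_leq_card; apply/subsetP => y.
    rewrite !inE => /andP[_ /orP[eay|/existsP[z /andP[eaz ezy]]]].
      by rewrite eay.
    case: (eqVneq z u) => [zu|zu]; first by rewrite -zu ezy orbT.
    by rewrite -(ho z eaz zu) ezy !orbT.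
  apply: leq_trans (card3 _ _ _) _.
  have := hx a as_ x eo ou; move: da; rewrite /deg; lia.
have [c' [c'L c'P]] := greedy se (fun a _ => HL a (in_setT a)) hN c1L c1P.
have hall : forall x, x \in (u |: B0) :|: [set x in s].
  by move=> x; rewrite !inE; case: (x == u); case: (x \in s).
by exists c'; split => [x _|x y _ _]; [apply: c'L | apply: c'P].
Qed.

Local Open Scope ring_scope.

Lemma numfacts (R : realFieldType) (eps : R) (k : nat) :
  0 < eps -> eps <= 1 / 20%:R -> 3%:R / eps ^+ 2 <= k%:R ->
  0 < 6%:R / eps /\ 2 * (6%:R / eps) + 3 <= k%:R.
Proof.
move=> e0 e20 ek.
have et : eps * eps^-1 = 1 by rewrite mulfV // gt_eqF.
have t0 : 0 < eps^-1 by rewrite invr_gt0.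
have t20 : 20 <= eps^-1.
  have : eps * 20 <= 1 by rewrite -ler_pdivlMr // mul1r in e20 *; lra.
  nra.
move: ek; rewrite -exprVn => ek.
split; first by rewrite divr_gt0 // ltr0n.
set t := eps^-1 in t0 t20 ek *.
have h : 12 * t + 3 <= 3 * t ^+ 2.
  rewrite expr2; nra.
have -> : 2 * (6%:R / eps) + 3 = 12 * t + 3 by rewrite /t; ring.
lra.
Qed.

Theorem lemma3 (R : realFieldType) (eps : R) (k : nat) (V : finType) (e : rel V) :
  0 < eps -> eps <= 1 / 20%:R ->
  3%:R / eps ^+ 2 <= k%:R ->
  symmetric e -> irreflexive e ->
  (forall v, (deg e v <= k)%N) ->
  ~ sq_list_colorable setT e k.+1 ->
  (forall (S : {set V}) (f : rel V), proper_subgraph e S f ->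
     sq_list_colorable S f k.+1) ->
  let M := 6%:R / eps in
  [/\ (forall u, inV1 M e u ->
         exists w0, [/\ e u w0, k%:R - M <= (deg e w0)%:R,
           (forall w, e u w -> k%:R - M <= (deg e w)%:R -> w = w0) &
           (forall w, e u w -> w != w0 -> deg e w = 2%N)]),
      (forall u v, inV1 M e u -> inV1 M e v -> ~~ e u v) &
      (forall v, inV1 M e v -> ~ inT M e v)].
Proof.
move=> e0 e20 ek se ie hdk ncol min M.
have [M0 hkM] : 0 < M /\ 2 * M + 3 <= k%:R := @numfacts R eps k e0 e20 ek.
clearbody M.
pose D := [set w | (deg e w)%:R <= M - 1].
have hfix : forall u, inV1 M e u -> V1_cond M e D u.
  move=> u hu.
  pose X := [set w | `[< V1_cond M e D w >]].
  have : u \in X.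
    apply: hu => w hw; rewrite inE; apply/asboolP.
    case: hw => [hdw [s [us ss hs hif]]]; split=> //; exists s; split=> //.
    case: s hif {us ss hs} => // v1 s' [h1 h2]; split => // v vs w' ew wu.
    have := h2 v vs w' ew wu; rewrite inE => /asboolP [hd' _].
    by rewrite inE.
  by rewrite inE => /asboolP.
have key : forall u, inV1 M e u -> exists s : seq V,
   [/\ uniq s, size s = (deg e u).-1, (forall v, v \in s -> e u v /\ deg e v = 2%N),
       (forall v, v \in s -> forall w, e v w -> w != u -> (deg e w)%:R <= M - 1) &
       [/\ (deg e u)%:R <= M - 1, (0 < deg e u)%N &
         forall w, e u w -> w \notin s -> k%:R - M <= (deg e w)%:R]].
  move=> u /hfix [hdu [s [us ss hs hif]]].
  have hsw : forall v, v \in s -> forall w, e v w -> w != u -> (deg e w)%:R <= M - 1.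
    case: s hif {us ss hs} => // v1 s' [h1 h2] v.
    rewrite inE => /predU1P [-> //| vs] w ew wu.
    by have := h2 v vs w ew wu; rewrite inE.
  have hs1 : forall v, v \in s -> e u v by move=> v /hs[].
  have red := reduce se min us ss hs.
  have hx : forall v, v \in s -> forall w, e v w -> w != u ->
      (deg e u + deg e w + 2 <= k)%N.
    move=> v vs w ew wu; have := hsw v vs w ew wu => hw.
    rewrite -(ler_nat R) !natrD; lra.
  have d0 : (0 < deg e u)%N.
    rewrite lt0n; apply/negP => /eqP d0; apply: ncol; apply: red hx _ (hdk u).
    move=> w euw; exfalso; move: d0; rewrite /deg => /eqP; rewrite cards_eq0 => /eqP H.
    have : w \in [set w | e u w] by rewrite inE.
    by rewrite H inE.
  exists s; split => //; split => // w euw ws.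
  case: leP => // hsmall; exfalso.
  apply: ncol; apply: red hx _ (hdk u) => w' euw' ws'.
  rewrite (W_uniq us ss hs1 euw' ws' euw ws) -(ltr_nat R) natrD; lra.
have ii : forall u v, inV1 M e u -> inV1 M e v -> ~~ e u v.
  move=> u v hu hv; apply/negP => euv.
  have [s [us ss hs hsw [hdu d0 hbig]]] := key u hu.
  have [t [ut st ht htw [hdv d0v hbigv]]] := key v hv.
  case: (boolP (v \in s)) => vs; last first.
    by have := hbig v euv vs; lra.
  have [w0 [ew0 w0t]] := W_exists ut st (fun x hx => (ht x hx).1) d0v.
  have hb := hbigv w0 ew0 w0t.
  case: (eqVneq w0 u) => [w0u|w0u].
    by subst; lra.
  by have := hsw v vs w0 ew0 w0u; lra.
split => //.
- move=> u hu; have [s [us ss hs hsw [hdu d0 hbig]]] := key u hu.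
  have hs1 : forall v, v \in s -> e u v by move=> v /hs[].
  have [w0 [ew0 w0s]] := W_exists us ss hs1 d0.
  exists w0; split => //; first exact: hbig.
    move=> w ew hw; case: (boolP (w \in s)) => ws.
      by move: hw; rewrite (hs w ws).2 => hw; exfalso; lra.
    exact: (W_uniq us ss hs1 ew ws ew0 w0s).
  move=> w ew ww0; case: (boolP (w \in s)) => ws; first exact: (hs w ws).2.
  by rewrite (W_uniq us ss hs1 ew ws ew0 w0s) eqxx in ww0.
- move=> v hv [d2 hT].
  have [s [us ss hs hsw [hdu d0 hbig]]] := key v hv.
  have hs1 : forall x, x \in s -> e v x by move=> x /hs[].
  have [w0 [ew0 _]] := W_exists us ss hs1 d0.
  by have := ii v w0 hv (hT w0 ew0); rewrite ew0.
Qed.
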